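(* Consider an instance $(S,C,T,\mathbf{p},\mathbf{c})$ of the value-dependent DFEP with binary tests ($\ell=2$), where $S$ contains objects of at least two distinct classes. Let $\tau\in T$ be a test minimizing $\max_{i\in\{1,2\}} \frac{c^i(t)}{P(S)-P(S^i_t)}$ over all $t\in T$ (the test chosen by \textsc{DividePairs} at the root), and let $q\in\{1,2\}$ be an index attaining $\max\{c^1(\tau)+Cost_W(S^1_\tau),\; c^2(\tau)+Cost_W(S^2_\tau)\}$, where $Cost_W(G)$ is the worst testing cost of the decision tree produced by \textsc{DividePairs} on $G$. Then $$OPT_W(S)\;\ge\; \frac{c^q(\tau)\,P(S)}{P(S)-P(S^q_\tau)}.$$
   Context: Value-dependent DFEP: $S$ is a finite set of $n$ objects partitioned into classes $C=\{C_1,\dots,C_m\}$; $\mathbf p$ is a probability distribution on $S$; $T$ is a set of tests $t:S\to\{1,\dots,\ell\}$, complete in the sense that any two distinct objects are distinguished by some test; each test $t$ has $\ell$ costs $c^1(t),\dots,c^\ell(t)\in\mathbb{Q}^+$, and applying $t$ to object $s$ costs $c^{t(s)}(t)$. For $G\subseteq S$, $G^i_t=\{s\in G: t(s)=i\}$. A decision tree for $G$ is a leaf labeled with a class if all objects of $G$ are in that class; otherwise its root is labeled with a test $t$ and its children are decision trees for the nonempty sets $G^i_t$. For an object $s$, $cost(D,s)$ is the sum of $c^{t(s)}(t)$ over the tests $t$ on the root-to-leaf path of $s$ in $D$; $cost_W(D)=\max_s cost(D,s)$, and $OPT_W(G)$ is the minimum of $cost_W(D)$ over decision trees $D$ for $G$.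 A pair of objects is separable if they lie in different classes; $P(G)$ is the number of separable pairs in $G$, i.e. $P(G)=\sum_{i<j} n_in_j$ where $n_i$ is the number of objects of $G$ in class $i$. A ratio with zero denominator is taken as $+\infty$. Algorithm \textsc{DividePairs} on a set $G$: if all objects of $G$ are in the same class, return a leaf; otherwise choose a test $t$ minimizing $\max_{1\le i\le\ell} c^i(t)/(P(G)-P(G^i_t))$, make it the root, and recursively build the subtrees for each nonempty $G^i_t$. *)

(* Defs.v *)
From mathcomp Require Import all_boot all_order all_algebra.
Set Implicit Arguments. Unset Strict Implicit. Unset Printing Implicit Defensive.
Import Order.TTheory GRing.Theory Num.Theory.
Local Open Scope ring_scope.

(* Objects: finType S; classes: finType K with class map cls : S -> K;
   tests: finType T with tst : T -> S -> bool (outcome true = "1", false = "2");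
   costs: c : T -> bool -> rat, c t b = cost of test t on an object with outcome b. *)

(* Decision trees: a node has one subtree per outcome (true-child, false-child).
   A subtree corresponding to an empty outcome set is irrelevant. *)
Inductive dtree (T K : Type) : Type :=
| Leaf of K
| Node of T & dtree T K & dtree T K.

Definition part (S T : finType) (tst : T -> S -> bool) (G : {set S}) (t : T) (b : bool)
  : {set S} := [set s in G | tst t s == b].

Definition in_class (S K : finType) (cls : S -> K) (G : {set S}) (k : K) : Prop :=
  forall s, s \in G -> cls s = k.

Definition single_class (S K : finType) (cls : S -> K) (G : {set S}) : Prop :=
  exists k, in_class cls G k.

Fixpoint is_dtree (S T K : finType) (cls : S -> K) (tst : T -> S -> bool)
  (G : {set S}) (D : dtree T K) : Prop :=
  match D with
  | Leaf k => in_class cls G k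
  | Node t D1 D2 =>
      ~ single_class cls G /\
      (part tst G t true != set0 -> is_dtree cls tst (part tst G t true) D1) /\
      (part tst G t false != set0 -> is_dtree cls tst (part tst G t false) D2)
  end.

Fixpoint cost (S T K : finType) (tst : T -> S -> bool) (c : T -> bool -> rat)
  (D : dtree T K) (s : S) : rat :=
  match D with
  | Leaf _ => 0
  | Node t D1 D2 => c t (tst t s) + cost tst c (if tst t s then D1 else D2) s
  end.

(* cost_W(D) over the objects of G (costs are nonnegative, so 0 is a neutral base) *)
Definition costW (S T K : finType) (tst : T -> S -> bool) (c : T -> bool -> rat)
  (G : {set S}) (D : dtree T K) : rat :=
  \big[Num.max/0]_(s in G) cost tst c D s.

(* P(G): number of unordered separable pairs = (number of ordered separable pairs)/2 *)
Definition npairs (S K : finType) (cls : S -> K) (G : {set S}) : nat :=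
  (#|[set xy : S * S | [&& xy.1 \in G, xy.2 \in G & cls xy.1 != cls xy.2]]|)./2.

(* Extended nonnegative rationals: None = +infinity *)
Definition ratio (a : rat) (d : nat) : option rat :=
  if d == 0%N then None else Some (a / d%:R).

Definition omax (x y : option rat) : option rat :=
  match x, y with
  | Some a, Some b => Some (Num.max a b)
  | _, _ => None
  end.

Definition ole (x y : option rat) : bool :=
  match x, y with
  | _, None => true
  | None, Some _ => false
  | Some a, Some b => a <= b
  end.

Definition score (S T K : finType) (cls : S -> K) (tst : T -> S -> bool)
  (c : T -> bool -> rat) (G : {set S}) (t : T) : option rat :=
  omax (ratio (c t true) (npairs cls G - npairs cls (part tst G t true)))
       (ratio (c t false) (npairs cls G - npairs cls (part tst G t false))).

(* D is a tree that DividePairs may output on G (for some tie-breaking rule) *)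
Inductive dp_tree (S T K : finType) (cls : S -> K) (tst : T -> S -> bool)
  (c : T -> bool -> rat) : {set S} -> dtree T K -> Prop :=
| dp_leaf G k : in_class cls G k -> dp_tree cls tst c G (Leaf T k)
| dp_node G t D1 D2 :
    ~ single_class cls G ->
    (forall t', ole (score cls tst c G t) (score cls tst c G t')) ->
    (part tst G t true != set0 -> dp_tree cls tst c (part tst G t true) D1) ->
    (part tst G t false != set0 -> dp_tree cls tst c (part tst G t false) D2) ->
    dp_tree cls tst c G (Node t D1 D2).

(* Main.v *)
From Pilot Require Import Defs.
From mathcomp Require Import all_boot all_order all_algebra.
Import Order.TTheory GRing.Theory Num.Theory.
Local Open Scope ring_scope.
Set Implicit Arguments. Unset Strict Implicit.

Definition A1 (S K : finType) (cls : S -> K) (G : {set S}) : {set S * S} :=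
  [set xy : S * S | [&& xy.1 \in G, xy.2 \in G, cls xy.1 != cls xy.2
                      & (enum_rank xy.1 < enum_rank xy.2)%N]].

Lemma npairsE (S K : finType) (cls : S -> K) (G : {set S}) :
  npairs cls G = #|A1 cls G|.
Proof.
rewrite /npairs.
set A := [set xy : S * S | [&& xy.1 \in G, xy.2 \in G & cls xy.1 != cls xy.2]].
set B := [set xy : S * S | (enum_rank xy.1 < enum_rank xy.2)%N].
have e1 : A1 cls G = A :&: B.
  by apply/setP => -[x y]; rewrite !inE /= !andbA.
have e2 : A :\: B = (fun xy : S * S => (xy.2, xy.1)) @^-1: (A :&: B).
  apply/setP => -[x y]; rewrite !inE /=.
  case hx: (x \in G); case hy: (y \in G); rewrite ?andbF //=.
  case: (eqVneq (cls x) (cls y)) => [e|hne]; first by rewrite ?andbF.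
  rewrite andbT /=.
  have hxy : enum_rank x != enum_rank y.
    apply/negP => /eqP /enum_rank_inj exy; by rewrite exy eqxx in hne.
  case: ltngtP => //= h.
  by case/negP: hxy; apply/eqP/val_inj.
have inj : injective (fun xy : S * S => (xy.2, xy.1)).
  by move=> [a b] [c d] /= [-> ->].
have hA : #|A| = (#|A :&: B| + #|A :\: B|)%N by rewrite cardsID.
rewrite hA e2 card_preimset // -e1 addnn.
by rewrite -[(#|A1 cls G|).*2]/(#|A1 cls G|.*2) doubleK.
Qed.

Lemma A1_sub (S K : finType) (cls : S -> K) (G H : {set S}) :
  G \subset H -> A1 cls G \subset A1 cls H.
Proof.
move=> sGH; apply/subsetP => -[x y]; rewrite !inE /= => /and4P [hx hy -> ->].
by rewrite (subsetP sGH x hx) (subsetP sGH y hy).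
Qed.

Lemma npairs_sub (S K : finType) (cls : S -> K) (G H : {set S}) :
  G \subset H -> (npairs cls G <= npairs cls H)%N.
Proof. by move=> s; rewrite !npairsE; apply: subset_leq_card; apply: A1_sub. Qed.

Lemma npairs_diff (S K : finType) (cls : S -> K) (G H X : {set S}) :
  G \subset H ->
  (npairs cls G - npairs cls (G :&: X) <= npairs cls H - npairs cls (H :&: X))%N.
Proof.
move=> sGH; rewrite !npairsE.
have e : forall G', (#|A1 cls G'| - #|A1 cls (G' :&: X)|)%N = #|A1 cls G' :\: A1 cls (G' :&: X)|.
  by move=> G'; rewrite cardsD (setIidPr (A1_sub cls (subsetIl G' X))).
rewrite !e; apply: subset_leq_card; apply/subsetP => -[x y]; rewrite !inE /=.
case/andP => hn /and4P [hx hy hc hr].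
rewrite (subsetP sGH x hx) (subsetP sGH y hy) hc hr /= !andbT.
by rewrite hx hy hc hr /= !andbT in hn.
Qed.

Lemma partE (S T : finType) (tst : T -> S -> bool) (G : {set S}) t b :
  part tst G t b = G :&: [set s | tst t s == b].
Proof. by apply/setP => s; rewrite !inE. Qed.

Lemma path_lb (S T K : finType) (cls : S -> K) (tst : T -> S -> bool)
  (c : T -> bool -> rat) (hc : forall t b, 0 <= c t b) (r : rat) (hr : 0 <= r)
  (hcond : forall t, exists i : bool,
     r * (npairs cls [set: S] - npairs cls (part tst [set: S] t i))%:R <= c t i) :
  forall (D : dtree T K) (G : {set S}), is_dtree cls tst G D -> G != set0 ->
  exists2 s, s \in G & r * (npairs cls G)%:R <= cost tst c D s.
Proof.
elim=> [k|t D1 IH1 D2 IH2] G /=.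
- move=> hG /set0Pn [s hs]; exists s => //.
  have -> : npairs cls G = 0%N.
    rewrite npairsE; apply/eqP; rewrite cards_eq0; apply/eqP/setP => -[x y].
    rewrite !inE /=; apply/negP => /and4P [hx hy hne _].
    by rewrite (hG x hx) (hG y hy) eqxx in hne.
  by rewrite mulr0.
- move=> [_ [h1 h2]] hG.
  case E1: (part tst G t true == set0).
    have EG : part tst G t false = G.
      apply/setP => s; rewrite inE; case hs: (s \in G) => //=.
      case ht: (tst t s) => //; move/eqP: E1 => /setP /(_ s).
      by rewrite !inE hs ht.
    rewrite EG in h2; have [s hs hcs] := IH2 G (h2 hG) hG.
    exists s => //.
    have : s \in part tst G t false by rewrite EG.
    rewrite inE => /andP [_ /eqP ->].
    by apply: ler_wpDl => //; exact: hc.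
  case E2: (part tst G t false == set0).
    have EG : part tst G t true = G.
      apply/setP => s; rewrite inE; case hs: (s \in G) => //=.
      case ht: (tst t s) => //; move/eqP: E2 => /setP /(_ s).
      by rewrite !inE hs ht.
    rewrite EG in h1; have [s hs hcs] := IH1 G (h1 hG) hG.
    exists s => //.
    have : s \in part tst G t true by rewrite EG.
    rewrite inE => /andP [_ /eqP ->].
    by apply: ler_wpDl => //; exact: hc.
  have IH : forall b : bool, exists2 s, s \in part tst G t b &
      r * (npairs cls (part tst G t b))%:R <= cost tst c (if b then D1 else D2) s.
    case.
      by apply: IH1; [apply: h1|]; rewrite E1.
    by apply: IH2; [apply: h2|]; rewrite E2.
  have [i hi] := hcond t.
  have [s hs hcs] := IH i.
  have hsG : s \in G by move: hs; rewrite inE => /andP [].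
  exists s => //.
  move: hs; rewrite inE => /andP [_ /eqP ->].
  have hsub : part tst G t i \subset G by apply/subsetP => x; rewrite inE => /andP [].
  have hle := npairs_sub cls hsub.
  rewrite -(subnK hle) natrD mulrDr.
  apply: lerD => //; apply: le_trans hi; apply: ler_wpM2l => //.
  rewrite ler_nat !partE; apply: npairs_diff; exact: subsetT.
Qed.

Lemma costW_ge (S T K : finType) (tst : T -> S -> bool) (c : T -> bool -> rat)
  (G : {set S}) (D : dtree T K) s :
  s \in G -> cost tst c D s <= costW tst c G D.
Proof.
move=> hs; rewrite /costW.
have : s \in index_enum S by rewrite mem_index_enum.
elim: (index_enum S) => // a l IH.
rewrite inE big_cons; case/orP => [/eqP <-|/IH h].
  by rewrite hs le_max lexx.
by case: (a \in G) => //; rewrite le_max h orbT.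
Qed.

Lemma score_cond (a b : bool -> rat) (n m : bool -> nat) (q : bool) :
  n q != 0%N -> (forall i, 0 <= b i) ->
  ole (omax (Pilot.Defs.ratio (a true) (n true)) (Pilot.Defs.ratio (a false) (n false)))
      (omax (Pilot.Defs.ratio (b true) (m true)) (Pilot.Defs.ratio (b false) (m false))) ->
  exists i : bool, a q / (n q)%:R * (m i)%:R <= b i.
Proof.
move=> nq hb; rewrite /Pilot.Defs.ratio.
case: (eqVneq (m true) 0%N) => [e|mt]; first by move=> _; exists true; rewrite e mulr0.
case: (eqVneq (m false) 0%N) => [e|mf]; first by move=> _; exists false; rewrite e mulr0.
idtac.
case: (eqVneq (n true) 0%N) => [nt|nt]; case: (eqVneq (n false) 0%N) => [nf|nf] //=;
  try by case: q nq; rewrite ?nt ?nf.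
have hq : a q / (n q)%:R <= Num.max (a true / (n true)%:R) (a false / (n false)%:R).
  by case: q {nq}; rewrite le_max lexx ?orbT.
move=> hm; have := le_trans hq hm; rewrite le_max => /orP [h|h].
  exists true; by rewrite -ler_pdivlMr // ltr0n lt0n.
exists false; by rewrite -ler_pdivlMr // ltr0n lt0n.
Qed.

Unset Implicit Arguments.

Theorem lemma1 (S T K : finType) (cls : S -> K) (p : S -> rat)
  (tst : T -> S -> bool) (c : T -> bool -> rat)
  (hp0 : forall s, 0 <= p s) (hp1 : \sum_(s : S) p s = 1)
  (hc : forall t b, 0 < c t b)
  (hcomplete : forall x y : S, x != y -> exists t, tst t x != tst t y)
  (h2 : exists x y : S, cls x != cls y)
  (tau : T)
  (htau : forall t, ole (score cls tst c [set: S] tau) (score cls tst c [set: S] t))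
  (Dch : bool -> dtree T K)
  (hDch : forall i, dp_tree cls tst c (part tst [set: S] tau i) (Dch i))
  (q : bool)
  (hq : forall i, c tau i + costW tst c (part tst [set: S] tau i) (Dch i)
                  <= c tau q + costW tst c (part tst [set: S] tau q) (Dch q)) :
  forall D : dtree T K, is_dtree cls tst [set: S] D ->
    c tau q * (npairs cls [set: S])%:R
      / ((npairs cls [set: S])%:R - (npairs cls (part tst [set: S] tau q))%:R)
    <= costW tst c [set: S] D.
Proof.
move=> D hD.
have hc0 : forall t b, 0 <= c t b by move=> t b; exact: ltW.
have hPq : (npairs cls (part tst [set: S] tau q) <= npairs cls [set: S])%N.
  by apply: npairs_sub; exact: subsetT.
have hS : [set: S] != set0.
  by case: h2 => x _; apply/set0Pn; exists x; rewrite inE.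
have hcost : forall r, 0 <= r -> (forall t, exists i : bool,
     r * (npairs cls [set: S] - npairs cls (part tst [set: S] t i))%:R <= c t i) ->
     r * (npairs cls [set: S])%:R <= costW tst c [set: S] D.
  move=> r hr hcond; have [s hs h] := path_lb hc0 hr hcond hD hS.
  exact: le_trans h (costW_ge _ _ _ hs).
case: (eqVneq (npairs cls (part tst [set: S] tau q)) (npairs cls [set: S])) => [eq|neq].
  rewrite eq subrr invr0 mulr0.
  apply: le_trans (hcost 0 (lexx 0) _); first by rewrite mul0r.
  by move=> t; exists true; rewrite mul0r.
have d0 : (npairs cls [set: S] - npairs cls (part tst [set: S] tau q) != 0)%N.
  by rewrite subn_eq0 -ltnNge ltn_neqAle neq hPq.
rewrite -natrB // mulrAC.
apply: hcost; first by apply: divr_ge0 => //; exact: ler0n.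
move=> t.
exact: (score_cond (a := c tau)
  (n := fun i => (npairs cls [set: S] - npairs cls (part tst [set: S] tau i))%N)
  (b := c t) (m := fun i => (npairs cls [set: S] - npairs cls (part tst [set: S] t i))%N)
  d0 (hc0 t) (htau t)).
Qed.
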